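(* Fix $\varepsilon\in\{1,-1\}$, $m\in\{1,2,5,7,8,10,11,13,14,16,17,19,22,23\}$, and a nonnegative integer $n$ such that $\delta_m(n)$ is squarefree. With $A=18(m+24n)-\varepsilon$, $B=4\varepsilon/9$, $D=-3$, $r=1/3+A^2$, the number $J(m,n)=\frac{1}{64}(B^2D+2ABDr+A^2Dr^2+r^3)$ is an integer.
   Context: Let $f_m(n)=62208n^2+(5184m-432\varepsilon)n+(108m^2-18\varepsilon m+1)$, let $i=1$ if $m$ is odd, $i=2$ if $m$ is even and $m\ne8,16$, and $i=4$ if $m\in\{8,16\}$, and let $\delta_m(n)=2^{1-i}(m+24n)f_m(n)$. *)

(* Defs.v *)
From mathcomp Require Import all_boot all_order all_algebra.
Set Implicit Arguments. Unset Strict Implicit. Unset Printing Implicit Defensive.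
Import Order.TTheory GRing.Theory Num.Theory.
Local Open Scope ring_scope.

Definition f_m (eps : int) (m n : nat) : rat :=
  (256 * 243) * (n%:R) ^+ 2 + (5184 * m%:R - 432 * eps%:~R) * n%:R
  + (108 * (m%:R) ^+ 2 - 18 * eps%:~R * m%:R + 1).

Definition i_m (m : nat) : nat :=
  if odd m then 1%N else if (m == 8%N) || (m == 16%N) then 4%N else 2%N.

Definition delta_m (eps : int) (m n : nat) : rat :=
  (2%:R ^ (1 - (i_m m)%:Z)) * (m%:R + 24 * n%:R) * f_m eps m n.

(* A rational number is squarefree: it is an integer d not divisible by k^2
   for any integer k with |k| <> 1 (in particular d <> 0). *)
Definition squarefree_rat (x : rat) : Prop :=
  exists d : int, x = d%:~R /\ forall k : int, (k * k %| d)%Z -> `|k| = 1.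

Definition A_mn (eps : int) (m n : nat) : rat :=
  18 * (m%:R + 24 * n%:R) - eps%:~R.
Definition B_eps (eps : int) : rat := 4 * eps%:~R / 9.
Definition D_c : rat := -3.
Definition r_mn (eps : int) (m n : nat) : rat := 1 / 3 + (A_mn eps m n) ^+ 2.

Definition J_mn (eps : int) (m n : nat) : rat :=
  let A := A_mn eps m n in let B := B_eps eps in let D := D_c in
  let r := r_mn eps m n in
  (B ^+ 2 * D + 2 * A * B * D * r + A ^+ 2 * D * r ^+ 2 + r ^+ 3) / 64.

(* Main.v *)
Require Import Defs.
From mathcomp Require Import all_boot all_order all_algebra.
From mathcomp Require Import ring lra.
Import Order.TTheory GRing.Theory Num.Theory.
Local Open Scope ring_scope.

Theorem lemma3p2 (eps : int) (m n : nat) :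
  (eps = 1 \/ eps = -1) ->
  m \in [:: 1; 2; 5; 7; 8; 10; 11; 13; 14; 16; 17; 19; 22; 23]%N ->
  squarefree_rat (delta_m eps m n) ->
  exists z : int, J_mn eps m n = z%:~R.
Proof.
move=> He _ _.
have HA : A_mn eps m n = 18 * ((m + 24 * n)%N)%:R - eps%:~R.
  by rewrite /A_mn natrD natrM.
rewrite /J_mn /r_mn HA /B_eps /D_c.
move: (m + 24 * n)%N => k.
have Hk := odd_double_half k.
move: (k./2) Hk => j.
case: (odd k) => <-; case: He => ->.
- exists ((-(755 * 1000 + 809)) * j%:Z ^+ 0 + (-((9 * 1000 + 596) * 1000 + 390)) * j%:Z ^+ 1 + (-((50 * 1000 + 776) * 1000 + 875)) * j%:Z ^+ 2 + (-((143 * 1000 + 314) * 1000 + 596)) * j%:Z ^+ 3 + (-((227 * 1000 + 561) * 1000 + 724)) * j%:Z ^+ 4 + (-((192 * 1000 + 735) * 1000 + 936)) * j%:Z ^+ 5 + (-((68 * 1000 + 24) * 1000 + 448)) * j%:Z ^+ 6).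
  rewrite /= natrD -muln2 natrM; field; done.
- exists ((-((1 * 1000 + 471) * 1000 + 934)) * j%:Z ^+ 0 + (-((16 * 1000 + 727) * 1000 + 476)) * j%:Z ^+ 1 + (-((79 * 1000 + 210) * 1000 + 791)) * j%:Z ^+ 2 + (-((200 * 1000 + 61) * 1000 + 900)) * j%:Z ^+ 3 + (-((284 * 1000 + 248) * 1000 + 764)) * j%:Z ^+ 4 + (-((215 * 1000 + 410) * 1000 + 752)) * j%:Z ^+ 5 + (-((68 * 1000 + 24) * 1000 + 448)) * j%:Z ^+ 6).
  rewrite /= natrD -muln2 natrM; field; done.
- exists ((0) * j%:Z ^+ 0 + (4) * j%:Z ^+ 1 + (-567) * j%:Z ^+ 2 + ((30 * 1000 + 132)) * j%:Z ^+ 3 + (-(813 * 1000 + 564)) * j%:Z ^+ 4 + (((11 * 1000 + 337) * 1000 + 408)) * j%:Z ^+ 5 + (-((68 * 1000 + 24) * 1000 + 448)) * j%:Z ^+ 6).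
  rewrite /= natrD -muln2 natrM; field; done.
- exists ((0) * j%:Z ^+ 0 + (-4) * j%:Z ^+ 1 + (-567) * j%:Z ^+ 2 + (-(30 * 1000 + 132)) * j%:Z ^+ 3 + (-(813 * 1000 + 564)) * j%:Z ^+ 4 + (-((11 * 1000 + 337) * 1000 + 408)) * j%:Z ^+ 5 + (-((68 * 1000 + 24) * 1000 + 448)) * j%:Z ^+ 6).
  rewrite /= natrD -muln2 natrM; field; done.
Qed.
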